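(* Let $\mathcal{M}=(M,\mathcal{C})$ be a $\beta$-model of MK$^*$ and let $(M_0,R)$ be a coding pair in $\mathcal{M}$. Then the quotient structure $(\tilde M_0,\tilde R)$ is extensional and well-founded.
   Context: MK$^*$ is Morse–Kelley class theory (two-sorted: sets and classes; models $(M,\mathcal{C})$ with $M$ a transitive ZFC model, $\mathcal{C}\subseteq\mathcal{P}(M)$; axioms include Class Comprehension for all two-sorted formulas and Global Choice, a class well-ordering of $M$) plus Class-Bounding $\forall x\,\exists A\,\varphi(x,A)\to\exists B\,\forall x\,\exists y\,\varphi(x,(B)_y)$, $(B)_y=\{z:(y,z)\in B\}$. A $\beta$-model: classes are well-founded in the model iff truly well-founded. A coding pair is $(M_0,R)$ with $M_0\in\mathcal{C}$ having a distinguished element $a$ and $R\in\mathcal{C}$ a binary relation on $M_0$ such that: (a) each $z\in M_0$ has a unique $n$ such that there is an $R$-chain $zRz_{n-1}R\cdots Rz_1Ra$; (b) if $y\neq z$, $yRx$, $zRx$ then $(M_0,R)\restriction y\not\cong(M_0,R)\restriction z$, where $(M_0,R)\restriction y$ is $y$ together with all elements connected to $y$ by an $R$-chain, with $R$ restricted; (c) if $y\neq z$ have the same $R$-distance from $a$ then $vRy\to\neg(vRz)$; (d) $R$ is well-founded. The quotient: for $b\in M_0$ let $[b]=\{b'\in M_0:(M_0,R)\restriction b'\cong(M_0,R)\restriction b\}$, let $\tilde b$ be a representative of $[b]$ chosen via the global well-order, $\tilde M_0=\{\tilde b:b\in M_0\}$, and $\tilde b\,\tilde R\,\tilde c$ iff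 there exist $b_0\in[b]$, $c_0\in[c]$ with $b_0Rc_0$. *)

(* Defs.v *)
(* The set sort is a type [M] with a membership relation [mem]; classes are
   predicates [M -> Prop]; the class sort of the model is [C : (M -> Prop) -> Prop]. *)
From Stdlib Require Import Arith.

Section MK.
Variable M : Type.
Variable mem : M -> M -> Prop.
Variable C : (M -> Prop) -> Prop.

Definition is_empty (e : M) : Prop := forall u, ~ mem u e.
Definition is_upair (w y z : M) : Prop := forall u, mem u w <-> (u = y \/ u = z).
Definition is_pair (p y z : M) : Prop :=
  forall w, mem w p <-> (is_upair w y y \/ is_upair w y z).
Definition crel (X : M -> Prop) (y z : M) : Prop := exists p, is_pair p y z /\ X p.
Definition section (B : M -> Prop) (y : M) : M -> Prop := fun z => crel B y z.

(** ** Two-sorted formulas (de Bruijn indices; set variables and class variables) *)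
Inductive fm : Type :=
| FMem  : nat -> nat -> fm
| FEq   : nat -> nat -> fm
| FIn   : nat -> nat -> fm
| FNeg  : fm -> fm
| FAnd  : fm -> fm -> fm
| FAllS : fm -> fm
| FAllC : fm -> fm.

Definition scons {A : Type} (a : A) (e : nat -> A) : nat -> A :=
  fun n => match n with 0 => a | S k => e k end.

Fixpoint sat (e : nat -> M) (E : nat -> (M -> Prop)) (f : fm) : Prop :=
  match f with
  | FMem i j => mem (e i) (e j)
  | FEq i j => e i = e j
  | FIn i k => E k (e i)
  | FNeg g => ~ sat e E g
  | FAnd g h => sat e E g /\ sat e E h
  | FAllS g => forall x : M, sat (scons x e) E g
  | FAllC g => forall X : M -> Prop, C X -> sat e (scons X E) g
  end.

Definition model_wf (X : M -> Prop) : Prop :=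
  forall Y : M -> Prop, C Y -> (exists x, Y x) ->
    exists x, Y x /\ forall y, Y y -> ~ crel X y x.

Definition global_wo (W : M -> Prop) : Prop :=
  C W /\
  (forall x, ~ crel W x x) /\
  (forall x y z, crel W x y -> crel W y z -> crel W x z) /\
  (forall x y, crel W x y \/ x = y \/ crel W y x) /\
  model_wf W.

Definition MKstar : Prop :=
  (* M is (isomorphic to) a transitive model: membership is extensional and well-founded *)
  (forall x y, (forall z, mem z x <-> mem z y) -> x = y) /\
  well_founded mem /\
  (* every class is a subclass of M: automatic (C ⊆ P(M)) *)
  (exists e, is_empty e) /\
  (forall y z, exists w, is_upair w y z) /\
  (forall x, exists u, forall z, mem z u <-> exists w, mem w x /\ mem z w) /\
  (forall x, exists p, forall z, mem z p <-> forall w, mem w z -> mem w x) /\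
  (exists x, (exists e, is_empty e /\ mem e x) /\
     forall u, mem u x -> exists s, mem s x /\ forall w, mem w s <-> (mem w u \/ w = u)) /\
  (forall A, C A -> forall x, exists y, forall z, mem z y <-> (mem z x /\ A z)) /\
  (forall F, C F -> (forall u v v', crel F u v -> crel F u v' -> v = v') ->
     forall x, exists y, forall w, mem w y <-> exists v, mem v x /\ crel F v w) /\
  (forall (f : fm) (e : nat -> M) (E : nat -> (M -> Prop)),
     (forall k, C (E k)) -> C (fun x => sat (scons x e) E f)) /\
  (exists W, global_wo W) /\
  (* Class-Bounding: ∀x ∃A φ(x,A) → ∃B ∀x ∃y φ(x,(B)_y)  (x = set var 0, A = class var 0) *)
  (forall (f : fm) (e : nat -> M) (E : nat -> (M -> Prop)),
     (forall k, C (E k)) ->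
     (forall x, exists A, C A /\ sat (scons x e) (scons A E) f) ->
     exists B, C B /\ forall x, exists y, sat (scons x e) (scons (section B y) E) f).

Definition beta_model : Prop :=
  forall X, C X -> (model_wf X <-> well_founded (crel X)).

Section Coding.
Variables (M0 : M -> Prop) (a : M) (R : M -> Prop).

Definition rR (y x : M) : Prop := crel R y x.

Fixpoint chain (n : nat) (z w : M) : Prop :=
  match n with
  | 0 => z = w
  | S k => exists z', rR z z' /\ chain k z' w
  end.

Definition below (y : M) : M -> Prop := fun v => exists n, chain n v y.

Definition restr_iso (y z : M) : Prop :=
  exists F, C F /\
    (forall u v, crel F u v -> below y u /\ below z v) /\
    (forall u, below y u -> exists v, crel F u v /\ forall v', crel F u v' -> v' = v) /\
    (forall v, below z v -> exists u, crel F u v /\ forall u', crel F u' v -> u' = u) /\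
    (forall u u' v v', crel F u v -> crel F u' v' -> (rR u u' <-> rR v v')).

Definition coding_pair : Prop :=
  C M0 /\ M0 a /\ C R /\
  (forall p, R p -> exists y x, is_pair p y x /\ M0 y /\ M0 x) /\
  (forall z, M0 z -> exists n, chain n z a /\ forall m, chain m z a -> m = n) /\
  (forall x y z, y <> z -> rR y x -> rR z x -> ~ restr_iso y z) /\
  (forall y z n, M0 y -> M0 z -> y <> z -> chain n y a -> chain n z a ->
     forall v, rR v y -> ~ rR v z) /\
  model_wf R.

Definition cls (b : M) : M -> Prop := fun b' => M0 b' /\ restr_iso b' b.

Definition is_rep (W : M -> Prop) (b r : M) : Prop :=
  cls b r /\ forall r', cls b r' -> r' = r \/ crel W r r'.

Definition tM0 (W : M -> Prop) : M -> Prop := fun x => exists b, M0 b /\ is_rep W b x.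

Definition tR (W : M -> Prop) (x y : M) : Prop :=
  exists b c, M0 b /\ M0 c /\ is_rep W b x /\ is_rep W c y /\
    exists b0 c0, cls b b0 /\ cls c c0 /\ rR b0 c0.

Definition extensional (D : M -> Prop) (Q : M -> M -> Prop) : Prop :=
  forall x y, D x -> D y -> (forall v, D v -> (Q v x <-> Q v y)) -> x = y.

Definition wf_on (D : M -> Prop) (Q : M -> M -> Prop) : Prop :=
  well_founded (fun u v => D u /\ D v /\ Q u v).

End Coding.
End MK.

Arguments MKstar {M}.
Arguments beta_model {M}.
Arguments global_wo {M}.
Arguments coding_pair {M}.
Arguments tM0 {M}.
Arguments tR {M}.
Arguments extensional {M}.
Arguments wf_on {M}.

(* Main.v *)
Require Import Defs.
From Stdlib Require Import Classical FunctionalExtensionality PropExtensionality Setoid Morphisms Lia.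

Section S.
Variable M : Type.
Variable mem : M -> M -> Prop.
Variable C : (M -> Prop) -> Prop.

Notation sat := (sat M mem C).
Notation crel := (crel M mem).
Notation is_pair := (is_pair M mem).
Notation is_upair := (is_upair M mem).

Definition FOr a b := FNeg (FAnd (FNeg a) (FAnd (FNeg b) (FNeg b))).
Definition FImp a b := FNeg (FAnd a (FNeg b)).
Definition FIff a b := FAnd (FImp a b) (FImp b a).
Definition FExS a := FNeg (FAllS (FNeg a)).
Definition FExC a := FNeg (FAllC (FNeg a)).

Lemma sat_or e E a b : sat e E (FOr a b) <-> sat e E a \/ sat e E b.
Proof. unfold FOr; simpl; tauto. Qed.
Lemma sat_imp e E a b : sat e E (FImp a b) <-> (sat e E a -> sat e E b).
Proof. unfold FImp; simpl; tauto. Qed.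
Lemma sat_iff e E a b : sat e E (FIff a b) <-> (sat e E a <-> sat e E b).
Proof. unfold FIff; cbn [sat]; rewrite !sat_imp; tauto. Qed.
Lemma sat_exs e E a : sat e E (FExS a) <-> exists x, sat (scons x e) E a.
Proof. unfold FExS; simpl; split.
  - intro H; apply NNPP; intro H'; apply H; intros x Hx; apply H'; eauto.
  - intros [x Hx] H; exact (H x Hx). Qed.
Lemma sat_exc e E a : sat e E (FExC a) <-> exists X, C X /\ sat e (scons X E) a.
Proof. unfold FExC; simpl; split.
  - intro H; apply NNPP; intro H'; apply H; intros x Cx Hx; apply H'; eauto.
  - intros [x [Cx Hx]] H; exact (H x Cx Hx). Qed.

Lemma sat_mem e E i j : sat e E (FMem i j) <-> mem (e i) (e j). Proof. reflexivity. Qed.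
Lemma sat_eq e E i j : sat e E (FEq i j) <-> e i = e j. Proof. reflexivity. Qed.
Lemma sat_in e E i k : sat e E (FIn i k) <-> E k (e i). Proof. reflexivity. Qed.
Lemma sat_neg e E f : sat e E (FNeg f) <-> ~ sat e E f. Proof. reflexivity. Qed.
Lemma sat_and e E f g : sat e E (FAnd f g) <-> sat e E f /\ sat e E g. Proof. reflexivity. Qed.
Lemma sat_alls e E f : sat e E (FAllS f) <-> forall x, sat (scons x e) E f. Proof. reflexivity. Qed.
Lemma sat_allc e E f : sat e E (FAllC f) <-> forall X, C X -> sat e (scons X E) f. Proof. reflexivity. Qed.
Opaque FOr FImp FIff FExS FExC.
Ltac sat_hook := fail.
Ltac satsimp := repeat (sat_hook || (progress cbn [sat scons] in * ) || setoid_rewrite sat_or || setoid_rewrite sat_imp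
  || setoid_rewrite sat_iff || setoid_rewrite sat_exs || setoid_rewrite sat_exc).

Definition fupair i j k := FAllS (FIff (FMem 0 (S i)) (FOr (FEq 0 (S j)) (FEq 0 (S k)))).
Lemma sat_fupair e E i j k : sat e E (fupair i j k) <-> is_upair (e i) (e j) (e k).
Proof. unfold fupair, is_upair. satsimp. reflexivity. Qed.
Opaque fupair.
Ltac sat_hook ::= first [setoid_rewrite sat_fupair].

Definition fpair i j k := FAllS (FIff (FMem 0 (S i)) (FOr (fupair 0 (S j) (S j)) (fupair 0 (S j) (S k)))).
Lemma sat_fpair e E i j k : sat e E (fpair i j k) <-> is_pair (e i) (e j) (e k).
Proof. unfold fpair, is_pair. satsimp. reflexivity. Qed.
Opaque fpair.
Ltac sat_hook ::= first [setoid_rewrite sat_fupair | setoid_rewrite sat_fpair].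

Definition fcrel k i j := FExS (FAnd (fpair 0 (S i) (S j)) (FIn 0 k)).
Lemma sat_fcrel e E k i j : sat e E (fcrel k i j) <-> crel (E k) (e i) (e j).
Proof. unfold fcrel, Defs.crel. satsimp. reflexivity. Qed.
Opaque fcrel.
Ltac sat_hook ::= first [setoid_rewrite sat_fupair | setoid_rewrite sat_fpair | setoid_rewrite sat_fcrel].


Hypothesis HMK : MKstar mem C.

Lemma ext_ax : forall x y, (forall z, mem z x <-> mem z y) -> x = y.
Proof. destruct HMK as (H1&H2&H3&H4&H5&H6&H7&H8&H9&H10&H11&H12); exact H1. Qed.
Lemma upair_ax : forall y z, exists w, is_upair w y z.
Proof. destruct HMK as (H1&H2&H3&H4&H5&H6&H7&H8&H9&H10&H11&H12); exact H4. Qed.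
Lemma compr_ax : forall (f : fm) (e : nat -> M) (E : nat -> (M -> Prop)),
     (forall k, C (E k)) -> C (fun x => sat (scons x e) E f).
Proof. destruct HMK as (H1&H2&H3&H4&H5&H6&H7&H8&H9&H10&H11&H12); exact H10. Qed.

Lemma compr f e E (P : M -> Prop) : (forall k, C (E k)) ->
  (forall x, sat (scons x e) E f <-> P x) -> C P.
Proof.
  intros HE HP. replace P with (fun x => sat (scons x e) E f).
  - apply compr_ax; auto.
  - apply functional_extensionality; intro x; apply propositional_extensionality; auto.
Qed.

Lemma pair_ex y z : exists p, is_pair p y z.
Proof.
  destruct (upair_ax y y) as [w1 H1]. destruct (upair_ax y z) as [w2 H2].
  destruct (upair_ax w1 w2) as [p Hp]. exists p. intro w. rewrite (Hp w). split.
  - intros [Hw|Hw]; subst w; auto.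
  - intros [Hw|Hw]; [left|right]; apply ext_ax; intro u;
      [rewrite (Hw u), (H1 u) | rewrite (Hw u), (H2 u)]; tauto.
Qed.

Lemma pair_inj p y z y' z' : is_pair p y z -> is_pair p y' z' -> y = y' /\ z = z'.
Proof.
  intros Hp Hp'.
  destruct (upair_ax y y) as [w1 H1].
  assert (Hy : y' = y).
  { assert (mem w1 p) by (apply Hp; auto).
    apply Hp' in H. destruct H as [H|H]; assert (mem y' w1) by (apply H; auto);
      apply H1 in H0; tauto. }
  subst y'. split; [reflexivity|].
  destruct (upair_ax y z) as [w2 H2]. destruct (upair_ax y z') as [w3 H3].
  assert (A2 : mem w2 p) by (apply Hp; auto).
  assert (A3 : mem w3 p) by (apply Hp'; auto).
  apply Hp' in A2. apply Hp in A3.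
  assert (Z2 : mem z w2) by (apply H2; auto).
  assert (Z3 : mem z' w3) by (apply H3; auto).
  destruct A2 as [A2|A2]; apply A2 in Z2;
  destruct A3 as [A3|A3]; apply A3 in Z3; intuition congruence.
Qed.

Definition mkcls (P : M -> M -> Prop) : M -> Prop := fun p => exists u v, is_pair p u v /\ P u v.

Lemma crel_mk P x y : crel (mkcls P) x y <-> P x y.
Proof.
  unfold Defs.crel, mkcls. split.
  - intros (p & Hp & u & v & Hp' & HP). destruct (pair_inj _ _ _ _ _ Hp Hp') as [-> ->]. auto.
  - intro H. destruct (pair_ex x y) as [p Hp]. exists p; split; auto. exists x, y; auto.
Qed.

Definition fmk (f : fm) := FExS (FExS (FAnd (fpair 2 1 0) f)).

Lemma C_mk f e E (P : M -> M -> Prop) : (forall k, C (E k)) ->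
  (forall p u v, sat (scons v (scons u (scons p e))) E f <-> P u v) -> C (mkcls P).
Proof.
  intros HE HP. apply (compr (fmk f) e E); auto. intro p. unfold fmk, mkcls. satsimp.
  setoid_rewrite HP. reflexivity.
Qed.


Variables (M0 : M -> Prop) (a : M) (R : M -> Prop).
Hypothesis Hbeta : beta_model mem C.
Hypothesis Hcp : coding_pair mem C M0 a R.

Notation rR := (Defs.rR M mem R).
Notation chain := (Defs.chain M mem R).
Notation below := (Defs.below M mem R).
Notation restr_iso := (Defs.restr_iso M mem C R).

Lemma CM0 : C M0. Proof. apply Hcp. Qed.
Lemma CR : C R. Proof. apply Hcp. Qed.
Lemma dist_ax : forall z, M0 z -> exists n, chain n z a /\ forall m, chain m z a -> m = n.
Proof. apply Hcp. Qed.
Lemma b_ax : forall x y z, y <> z -> rR y x -> rR z x -> ~ restr_iso y z.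
Proof. apply Hcp. Qed.
Lemma c_ax : forall y z n, M0 y -> M0 z -> y <> z -> chain n y a -> chain n z a ->
     forall v, rR v y -> ~ rR v z.
Proof. apply Hcp. Qed.
Lemma wfR : well_founded (crel R).
Proof. apply (proj1 (Hbeta R CR)). apply Hcp. Qed.

Lemma rR_M0 y x : rR y x -> M0 y /\ M0 x.
Proof.
  intros (p & Hp & HR). destruct Hcp as (_&_&_&Hpairs&_).
  destruct (Hpairs p HR) as (y' & x' & Hp' & H1 & H2).
  destruct (pair_inj _ _ _ _ _ Hp Hp') as [-> ->]. auto.
Qed.

Lemma chain_app n m u v w : chain n u v -> chain m v w -> chain (n + m) u w.
Proof.
  revert u; induction n as [|n IH]; intros u H1 H2; simpl in *.
  - subst; auto.
  - destruct H1 as (z & Hz & Hc). exists z; split; auto.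
Qed.

Lemma chain_last n u w : chain (S n) u w <-> exists c, chain n u c /\ rR c w.
Proof.
  revert u; induction n as [|n IH]; intros u.
  - simpl. split.
    + intros (z & Hz & ->). exists u; auto.
    + intros (c & -> & Hc). exists w; auto.
  - split.
    + intros (z & Hz & Hc). apply IH in Hc. destruct Hc as (c & Hc & Hcw).
      exists c; split; auto. exists z; auto.
    + intros (c & (z & Hz & Hc) & Hcw). exists z; split; auto. apply IH. eauto.
Qed.

Lemma chain_M0 n v y : chain n v y -> M0 y -> M0 v.
Proof.
  destruct n as [|n]; simpl.
  - intros -> ; auto.
  - intros (z & Hz & _) _. apply (rR_M0 _ _ Hz).
Qed.

Lemma no_cycle_acc u : Acc (crel R) u -> forall n, ~ chain (S n) u u.
Proof.
  induction 1 as [u _ IH]. intros n Hc.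
  apply chain_last in Hc. destruct Hc as (w & Hc & Hw).
  apply (IH w Hw n). destruct n as [|n].
  - simpl in Hc. subst. exists w; split; auto; reflexivity.
  - exists u. split; auto.
Qed.

Lemma no_cycle n u : ~ chain (S n) u u.
Proof. apply no_cycle_acc, wfR. Qed.

Lemma below_refl y : below y y.
Proof. exists 0; reflexivity. Qed.

Lemma below_trans x y z : below y x -> below z y -> below z x.
Proof. intros [n Hn] [m Hm]. exists (n + m). eapply chain_app; eauto. Qed.

Lemma below_step u v : rR u v -> below v u.
Proof. intro H. exists 1. exists v; split; auto; reflexivity. Qed.

Lemma below_cycle u v : below u v -> rR u v -> False.
Proof. intros [n Hn] H. apply (no_cycle n u). exists v; auto. Qed.

Lemma chain_len n v y k : M0 y -> chain n v y -> chain k y a ->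
  forall m, chain m v a -> m = n + k.
Proof.
  intros Hy Hc Hk m Hm. assert (Hv : M0 v) by (eapply chain_M0; [exact Hc|exact Hy]).
  destruct (dist_ax v Hv) as (d & Hd & Hu).
  rewrite (Hu m Hm). symmetry. apply Hu. eapply chain_app; eauto.
Qed.

Lemma same_target n : forall v p q, chain n v p -> chain n v q -> M0 v ->
  forall k, chain k p a -> chain k q a -> p = q.
Proof.
  induction n as [|n IH]; intros v p q Hp Hq Hv k Hkp Hkq; simpl in *.
  - congruence.
  - destruct Hp as (v1 & H1 & Hp). destruct Hq as (v2 & H2 & Hq).
    destruct (rR_M0 _ _ H1) as [_ Hv1]. destruct (rR_M0 _ _ H2) as [_ Hv2].
    destruct (classic (v1 = v2)) as [<-|Hne].
    + eapply IH; eauto.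
    + exfalso. apply (c_ax v1 v2 (n + k) Hv1 Hv2 Hne (chain_app _ _ _ _ _ Hp Hkp)
        (chain_app _ _ _ _ _ Hq Hkq) v H1 H2).
Qed.

Lemma disjoint u1 u2 x v : rR u1 x -> rR u2 x -> below u1 v -> below u2 v -> u1 = u2.
Proof.
  intros H1 H2 [n Hn] [m Hm].
  destruct (rR_M0 _ _ H1) as [M1 Mx]. destruct (rR_M0 _ _ H2) as [M2 _].
  destruct (dist_ax x Mx) as (k & Hk & _).
  assert (K1 : chain (S k) u1 a) by (exists x; auto).
  assert (K2 : chain (S k) u2 a) by (exists x; auto).
  assert (Hnm : n = m).
  { assert (E1 := chain_len _ _ _ _ M1 Hn K1 _ (chain_app _ _ _ _ _ Hm K2)). lia. }
  subst m. eapply same_target; eauto. eapply chain_M0; eauto.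
Qed.


Definition belowf (Rr : M -> Prop) v y := forall X, C X -> X y ->
  (forall u w, X w -> crel Rr u w -> X u) -> X v.

Definition fbelow r i j := FAllC (FImp (FIn j 0) (FImp (FAllS (FAllS
   (FImp (FAnd (FIn 0 0) (fcrel (S r) 1 0)) (FIn 1 0)))) (FIn i 0))).

Lemma sat_fbelow e E r i j : sat e E (fbelow r i j) <-> belowf (E r) (e i) (e j).
Proof.
  unfold fbelow, belowf. satsimp.
  split; intros H X HX Hy Hcl; apply H; auto; [intros u w [? ?] | intros u w ? ?]; eapply Hcl; eauto.
Qed.
Opaque fbelow.
Ltac sat_hook ::= first [setoid_rewrite sat_fupair | setoid_rewrite sat_fpair | setoid_rewrite sat_fcrel | setoid_rewrite sat_fbelow].

Lemma below_iff y v : below y v <-> belowf R v y.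
Proof.
  split.
  - intros [n Hn] X HX Hy Hcl. revert v Hn. induction n as [|n IH]; intros v Hn; simpl in Hn.
    + subst; auto.
    + destruct Hn as (z & Hz & Hn). eapply Hcl; [apply IH; eauto | exact Hz].
  - intro Hv.
    set (D := fun v => belowf R v y).
    assert (CD : C D).
    { apply (compr (fbelow 0 0 1) (scons y (fun _ => y)) (fun _ => R)).
      - intros; apply CR.
      - intro x. rewrite sat_fbelow. reflexivity. }
    assert (Dcl : forall u w, D w -> crel R u w -> D u).
    { intros u w Hw Huw X HX Hy Hcl. eapply Hcl; [apply Hw|]; eauto. }
    set (D' := fun v => D v /\ (v = y \/ exists w, D w /\ crel R v w)).
    assert (CD' : C D').
    { apply (compr (FAnd (fbelow 0 0 1) (FOr (FEq 0 1) (FExS (FAnd (fbelow 0 0 2) (fcrel 0 1 0)))))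
        (scons y (fun _ => y)) (fun _ => R)).
      - intros; apply CR.
      - intro x. satsimp.
        reflexivity. }
    assert (D'y : D' y) by (split; [|left; auto]; intros X _ Hy _; auto).
    assert (D'cl : forall u w, D' w -> crel R u w -> D' u).
    { intros u w [Hw _] Huw. split; [eapply Dcl; eauto|]. right; eauto. }
    assert (HD' : D' v) by (apply Hv; auto).
    assert (Main : forall k u, chain k u a -> D' u -> below y u).
    { induction k as [|k IH]; intros u Hk [Du [Hu|(w & Dw & Huw)]].
      - subst; apply below_refl.
      - simpl in Hk; subst u. destruct (rR_M0 _ _ Huw) as [_ Mw].
        destruct (dist_ax _ Mw) as (d & Hd & _).
        exfalso. apply (no_cycle d a). exists w; split; auto.
      - subst; apply below_refl.
      - destruct (rR_M0 _ _ Huw) as [Mu Mw].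
        destruct (dist_ax _ Mw) as (d & Hd & _).
        assert (Hkd : S k = S d).
        { destruct (dist_ax _ Mu) as (d' & _ & Hu').
          rewrite (Hu' _ Hk). symmetry. apply Hu'. exists w; auto. }
        injection Hkd as ->.
        assert (HD'w : D' w).
        { apply Dw; auto. }
        apply (below_trans u w y); [apply below_step; auto | apply IH; auto]. }
    destruct HD' as [Dv [->|(w & Dw & Hvw)]]; [apply below_refl|].
    destruct (rR_M0 _ _ Hvw) as [Mv _]. destruct (dist_ax _ Mv) as (k & Hk & _).
    apply (Main k); auto. split; auto. right; eauto.
Qed.


Definition iso F y z :=
    (forall u v, crel F u v -> below y u /\ below z v) /\
    (forall u, below y u -> exists v, crel F u v /\ forall v', crel F u v' -> v' = v) /\
    (forall v, below z v -> exists u, crel F u v /\ forall u', crel F u' v -> u' = u) /\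
    (forall u u' v v', crel F u v -> crel F u' v' -> (rR u u' <-> rR v v')).

Lemma ri_def y z : restr_iso y z <-> exists F, C F /\ iso F y z.
Proof. reflexivity. Qed.

Definition fiso r k i j :=
  FAnd (FAllS (FAllS (FImp (fcrel k 1 0) (FAnd (fbelow r 1 (S (S i))) (fbelow r 0 (S (S j)))))))
 (FAnd (FAllS (FImp (fbelow r 0 (S i)) (FExS (FAnd (fcrel k 1 0) (FAllS (FImp (fcrel k 2 0) (FEq 0 1)))))))
 (FAnd (FAllS (FImp (fbelow r 0 (S j)) (FExS (FAnd (fcrel k 0 1) (FAllS (FImp (fcrel k 0 2) (FEq 0 1)))))))
   (FAllS (FAllS (FAllS (FAllS (FImp (fcrel k 3 1) (FImp (fcrel k 2 0) (FIff (fcrel r 3 2) (fcrel r 1 0)))))))))).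

Lemma sat_fiso e E r k i j : E r = R -> (sat e E (fiso r k i j) <-> iso (E k) (e i) (e j)).
Proof.
  intro HEr. unfold fiso, iso. satsimp. setoid_rewrite HEr. setoid_rewrite <- below_iff.
  reflexivity.
Qed.
Opaque fiso.

Definition frestr r i j := FExC (fiso (S r) 0 i j).
Lemma sat_frestr e E r i j : E r = R -> (sat e E (frestr r i j) <-> restr_iso (e i) (e j)).
Proof.
  intro HEr. unfold frestr. rewrite sat_exc, ri_def. split; intros (F & HF & H); exists F; split; auto;
  revert H; apply (sat_fiso e (scons F E) (S r) 0 i j); auto.
Qed.
Opaque frestr.


Section IsoFacts.
Variables (F : M -> Prop) (y z : M).
Hypothesis HF : iso F y z.

Lemma iso_dom u v : crel F u v -> below y u /\ below z v.
Proof. apply HF. Qed.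
Lemma iso_tot u : below y u -> exists v, crel F u v.
Proof. intro H. destruct HF as (_&H2&_). destruct (H2 u H) as (v&?&_). eauto. Qed.
Lemma iso_sur v : below z v -> exists u, crel F u v.
Proof. intro H. destruct HF as (_&_&H3&_). destruct (H3 v H) as (u&?&_). eauto. Qed.
Lemma iso_fun u v v' : crel F u v -> crel F u v' -> v = v'.
Proof.
  intros Hv Hv'. destruct HF as (H1&H2&_). destruct (H1 _ _ Hv) as [Bu _].
  destruct (H2 u Bu) as (w & _ & Hw). rewrite (Hw v Hv), (Hw v' Hv'). auto.
Qed.
Lemma iso_inj u u' v : crel F u v -> crel F u' v -> u = u'.
Proof.
  intros Hv Hv'. destruct HF as (H1&_&H3&_). destruct (H1 _ _ Hv) as [_ Bv].
  destruct (H3 v Bv) as (w & _ & Hw). rewrite (Hw u Hv), (Hw u' Hv'). auto.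
Qed.
Lemma iso_pres u u' v v' : crel F u v -> crel F u' v' -> (rR u u' <-> rR v v').
Proof. apply HF. Qed.

Lemma iso_root : crel F y z.
Proof.
  destruct (iso_tot y (below_refl y)) as [v Hv].
  destruct (iso_dom _ _ Hv) as [_ [n Hn]]. destruct n as [|n]; simpl in Hn.
  - subst; auto.
  - exfalso. destruct Hn as (v1 & Hvv1 & Hn).
    destruct (iso_sur v1 (ex_intro _ n Hn)) as [u1 Hu1].
    apply (iso_pres _ _ _ _ Hv Hu1) in Hvv1.
    destruct (iso_dom _ _ Hu1) as [Bu1 _]. exact (below_cycle _ _ Bu1 Hvv1).
Qed.

Lemma iso_chain n : forall s s', chain n s s' -> below y s' -> forall t', crel F s' t' ->
  exists t, crel F s t /\ chain n t t'.
Proof.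
  induction n as [|n IH]; intros s s' Hc Bs' t' Ht'; simpl in Hc.
  - subst. exists t'; split; auto; reflexivity.
  - destruct Hc as (s1 & Hs1 & Hc). destruct (IH _ _ Hc Bs' _ Ht') as (t1 & Ht1 & Hc1).
    assert (Bs : below y s) by (apply (below_trans s s' y); [exists (S n); exists s1; auto|auto]).
    destruct (iso_tot s Bs) as [t Ht]. exists t; split; auto.
    exists t1; split; auto. apply (iso_pres _ _ _ _ Ht Ht1); auto.
Qed.
End IsoFacts.

Definition inv F := mkcls (fun u v => crel F v u).
Definition rst F s := mkcls (fun u v => below s u /\ crel F u v).
Definition comp F G := mkcls (fun u w => exists v, crel F u v /\ crel G v w).
Definition idb y := mkcls (fun u v => u = v /\ below y u).

Lemma iso_inv F y z : iso F y z -> iso (inv F) z y.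
Proof.
  intro HF. unfold inv. split; [|split; [|split]]; setoid_rewrite crel_mk.
  - intros u v H. destruct (iso_dom _ _ _ HF _ _ H); auto.
  - intros u Hu. destruct (iso_sur _ _ _ HF u Hu) as [v Hv]. exists v; split; auto.
    intros v' Hv'. eapply iso_inj; eauto.
  - intros v Hv. destruct (iso_tot _ _ _ HF v Hv) as [u Hu]. exists u; split; auto.
    intros u' Hu'. eapply iso_fun; eauto.
  - intros u u' v v' H H'. symmetry. apply (iso_pres _ _ _ HF _ _ _ _ H H').
Qed.

Lemma iso_restr F y z s t : iso F y z -> below y s -> crel F s t -> iso (rst F s) s t.
Proof.
  intros HF Bs Hst. destruct (iso_dom _ _ _ HF _ _ Hst) as [_ Bt].
  unfold rst. split; [|split; [|split]]; setoid_rewrite crel_mk.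
  - intros u v [[n Hn] Huv]. split; [exists n; auto|].
    destruct (iso_chain _ _ _ HF n u s Hn Bs t Hst) as (t0 & Ht0 & Hc).
    rewrite (iso_fun _ _ _ HF _ _ _ Huv Ht0). exists n; auto.
  - intros u Hu. destruct (iso_tot _ _ _ HF u (below_trans _ _ _ Hu Bs)) as [v Hv].
    exists v; split; auto. intros v' [_ Hv']. eapply iso_fun; eauto.
  - intros v [n Hn]. destruct (iso_chain _ _ _ (iso_inv _ _ _ HF) n v t Hn Bt s) as (u & Hu & Hc).
    { unfold inv; rewrite crel_mk; auto. }
    unfold inv in Hu; rewrite crel_mk in Hu.
    exists u; split; [split; [exists n|]; auto|]. intros u' [_ Hu']. eapply iso_inj; eauto.
  - intros u u' v v' [_ H] [_ H']. apply (iso_pres _ _ _ HF _ _ _ _ H H').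
Qed.

Lemma iso_comp F G x y z : iso F x y -> iso G y z -> iso (comp F G) x z.
Proof.
  intros HF HG. unfold comp. split; [|split; [|split]]; setoid_rewrite crel_mk.
  - intros u w (v & H1 & H2). split; [apply (iso_dom _ _ _ HF _ _ H1)| apply (iso_dom _ _ _ HG _ _ H2)].
  - intros u Hu. destruct (iso_tot _ _ _ HF u Hu) as [v Hv].
    destruct (iso_tot _ _ _ HG v (proj2 (iso_dom _ _ _ HF _ _ Hv))) as [w Hw].
    exists w; split; eauto. intros w' (v' & H1 & H2).
    rewrite <- (iso_fun _ _ _ HF _ _ _ Hv H1) in H2. exact (iso_fun _ _ _ HG _ _ _ H2 Hw).
  - intros w Hw. destruct (iso_sur _ _ _ HG w Hw) as [v Hv].
    destruct (iso_sur _ _ _ HF v (proj1 (iso_dom _ _ _ HG _ _ Hv))) as [u Hu].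
    exists u; split; eauto. intros u' (v' & H1 & H2).
    rewrite <- (iso_inj _ _ _ HG _ _ _ Hv H2) in H1. exact (iso_inj _ _ _ HF _ _ _ H1 Hu).
  - intros u u' w w' (v & H1 & H2) (v' & H1' & H2').
    rewrite (iso_pres _ _ _ HF _ _ _ _ H1 H1'). apply (iso_pres _ _ _ HG _ _ _ _ H2 H2').
Qed.

Lemma iso_refl y : iso (idb y) y y.
Proof.
  unfold idb. split; [|split; [|split]]; setoid_rewrite crel_mk.
  - intros u v [<- H]; auto.
  - intros u Hu. exists u; split; auto. intros v' [<- _]; auto.
  - intros u Hu. exists u; split; auto. intros v' [-> _]; auto.
  - intros u u' v v' [<- _] [<- _]. tauto.
Qed.


Lemma inhab : exists x : M, True.
Proof. destruct HMK as (H1&H2&[x _]&_). eauto. Qed.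

Lemma C_inv F : C F -> C (inv F).
Proof.
  intro HF. destruct inhab as [x0 _].
  apply (C_mk (fcrel 0 0 1) (fun _ => x0) (fun _ => F)); auto.
  intros p u v. satsimp. reflexivity.
Qed.

Lemma C_comp F G : C F -> C G -> C (comp F G).
Proof.
  intros HF HG. destruct inhab as [x0 _].
  apply (C_mk (FExS (FAnd (fcrel 0 2 0) (fcrel 1 0 1))) (fun _ => x0) (scons F (fun _ => G))).
  - intros [|k]; auto.
  - intros p u v. satsimp. reflexivity.
Qed.

Lemma C_rst F s : C F -> C (rst F s).
Proof.
  intros HF.
  apply (C_mk (FAnd (fbelow 1 1 3) (fcrel 0 1 0)) (fun _ => s) (scons F (fun _ => R))).
  - intros [|k]; auto; apply CR.
  - intros p u v. satsimp. rewrite <- below_iff. reflexivity.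
Qed.

Lemma C_idb y : C (idb y).
Proof.
  apply (C_mk (FAnd (FEq 1 0) (fbelow 0 1 3)) (fun _ => y) (fun _ => R)).
  - intros; apply CR.
  - intros p u v. satsimp. rewrite <- below_iff. reflexivity.
Qed.

Lemma ri_refl y : restr_iso y y.
Proof. exists (idb y). split; [apply C_idb | apply iso_refl]. Qed.

Lemma ri_sym y z : restr_iso y z -> restr_iso z y.
Proof. intros (F & HF & H). exists (inv F). split; [apply C_inv; auto | apply iso_inv; auto]. Qed.

Lemma ri_trans x y z : restr_iso x y -> restr_iso y z -> restr_iso x z.
Proof.
  intros (F & HF & H) (G & HG & H'). exists (comp F G).
  split; [apply C_comp; auto | eapply iso_comp; eauto].
Qed.

Lemma ri_sub F y z s t : C F -> iso F y z -> below y s -> crel F s t -> restr_iso s t.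
Proof.
  intros CF HF Bs Hst. exists (rst F s). split; [apply C_rst; auto | eapply iso_restr; eauto].
Qed.

Lemma ri_child y z u : restr_iso y z -> rR u y -> exists v, rR v z /\ restr_iso u v.
Proof.
  intros (F & CF & HF) Huy.
  destruct (iso_tot _ _ _ HF u (below_step _ _ Huy)) as [v Hv].
  exists v. split.
  - apply (iso_pres _ _ _ HF _ _ _ _ Hv (iso_root _ _ _ HF)); auto.
  - apply (ri_sub F y z u v); auto. apply below_step; auto.
Qed.

Lemma rigid F G y z : C F -> C G -> iso F y z -> iso G y z ->
  forall s t, crel F s t -> crel G s t.
Proof.
  intros CF CG HF HG s t Hst.
  destruct (iso_dom _ _ _ HF _ _ Hst) as [[n Hn] _].
  revert s t Hst Hn. induction n as [|n IH]; intros s t Hst Hn; simpl in Hn.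
  - subst. rewrite (iso_fun _ _ _ HF _ _ _ Hst (iso_root _ _ _ HF)). apply iso_root; auto.
  - destruct Hn as (s1 & Hs1 & Hn).
    assert (Bs1 : below y s1) by (exists n; auto).
    assert (Bs : below y s) by (apply (below_trans s s1 y); [apply below_step|]; auto).
    destruct (iso_tot _ _ _ HF s1 Bs1) as [t1 Ht1].
    assert (Gt1 := IH _ _ Ht1 Hn).
    destruct (iso_tot _ _ _ HG s Bs) as [t' Ht'].
    assert (R1 : rR t t1) by (apply (iso_pres _ _ _ HF _ _ _ _ Hst Ht1); auto).
    assert (R2 : rR t' t1) by (apply (iso_pres _ _ _ HG _ _ _ _ Ht' Gt1); auto).
    assert (I1 := ri_sub F y z s t CF HF Bs Hst).
    assert (I2 := ri_sub G y z s t' CG HG Bs Ht').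
    destruct (classic (t = t')) as [<-|Hne]; auto.
    exfalso. apply (b_ax t1 t t' Hne R1 R2). exact (ri_trans _ _ _ (ri_sym _ _ I1) I2).
Qed.


Lemma sat_frestrR e i j : sat e (fun _ => R) (frestr 0 i j) <-> restr_iso (e i) (e j).
Proof. apply sat_frestr; reflexivity. Qed.
Lemma sat_fisoR e H i j : sat e (scons H (fun _ => R)) (fiso 1 0 i j) <-> iso H (e i) (e j).
Proof. apply sat_fiso; reflexivity. Qed.

Variable W : M -> Prop.
Hypothesis HW : global_wo mem C W.

Notation cls := (Defs.cls M mem C M0 R).
Notation is_rep := (Defs.is_rep M mem C M0 R W).

Lemma C_cls b : C (cls b).
Proof.
  apply (compr (FAnd (FIn 0 1) (frestr 0 0 1)) (scons b (fun _ => b)) (scons R (fun _ => M0))).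
  - intros [|k]; [apply CR|apply CM0].
  - intro x. rewrite sat_and, sat_in, (sat_frestr _ (scons R (fun _ => M0)) 0 0 1 eq_refl). reflexivity.
Qed.

Lemma rep_ex b : M0 b -> exists r, is_rep b r.
Proof.
  intro Mb. destruct HW as (CW & Hirr & Htr & Htri & Hwf).
  destruct (Hwf (cls b) (C_cls b)) as (x & Hx & Hmin).
  { exists b. split; auto. apply ri_refl. }
  exists x. split; auto. intros r' Hr'.
  destruct (Htri r' x) as [H|[H|H]]; auto. exfalso; exact (Hmin r' Hr' H).
Qed.

Lemma rep_unique b r r' : is_rep b r -> is_rep b r' -> r = r'.
Proof.
  intros [Hr Hr1] [Hr' Hr1']. destruct HW as (CW & Hirr & Htr & Htri & Hwf).
  destruct (Hr1 r' Hr') as [->|H1]; auto.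
  destruct (Hr1' r Hr) as [->|H2]; auto.
  exfalso. apply (Hirr r). eauto.
Qed.

Definition Qrel := fun u v => tM0 mem C M0 R W u /\ tM0 mem C M0 R W v /\ tR mem C M0 R W u v.

Lemma wf_main : forall s, M0 s -> forall x b, is_rep b x -> restr_iso s b -> Acc Qrel x.
Proof.
  intro s. induction s as [s IH] using (well_founded_ind wfR).
  intros Ms x b Hxb Hsb. constructor.
  intros u (_ & _ & (b' & c' & Mb' & Mc' & Hub' & Hxc' & b0 & c0 & [Mb0 Cb0] & [Mc0 Cc0] & Hr)).
  destruct Hxb as [[_ Hxb] _]. destruct Hxc' as [[_ Hxc] _].
  assert (Hc0s : restr_iso c0 s).
  { apply (ri_trans _ c'); auto. apply (ri_trans _ x); [apply ri_sym; auto|].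
    apply (ri_trans _ b); auto. apply ri_sym; auto. }
  destruct (ri_child _ _ _ Hc0s Hr) as (t & Hts & Hb0t).
  apply (IH t Hts (proj1 (rR_M0 _ _ Hts)) u b'); auto.
  apply (ri_trans _ b0); auto. apply ri_sym; auto.
Qed.


Lemma corr_dir x y bx by' : M0 bx -> is_rep bx x -> M0 by' -> is_rep by' y ->
  (forall v, tM0 mem C M0 R W v -> tR mem C M0 R W v x -> tR mem C M0 R W v y) ->
  forall u, rR u x -> exists w, rR w y /\ restr_iso u w.
Proof.
  intros Mbx Hx Mby Hy H u Hux.
  destruct (rR_M0 _ _ Hux) as [Mu Mx].
  destruct (rep_ex u Mu) as [ut Hut].
  assert (T : tR mem C M0 R W ut x).
  { exists u, bx. do 4 (split; auto). exists u, x. split; [split; auto; apply ri_refl|].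
    split; auto. apply Hx. }
  apply H in T; [|exists u; auto].
  destruct T as (b' & c' & Mb' & Mc' & Hub' & Hyc' & b0 & c0 & [Mb0 Cb0] & [Mc0 Cc0] & Hr).
  assert (Hc0y : restr_iso c0 y).
  { apply (ri_trans _ c'); auto. apply ri_sym. apply Hyc'. }
  destruct (ri_child _ _ _ Hc0y Hr) as (w & Hwy & Hb0w).
  exists w. split; auto.
  apply (ri_trans _ ut). { apply ri_sym. apply Hut. }
  apply (ri_trans _ b'). { apply Hub'. }
  apply (ri_trans _ b0); auto. apply ri_sym; auto.
Qed.

Section ExtIso.
Variables x y : M.
Hypothesis Mx : M0 x.
Hypothesis My : M0 y.
Hypothesis Cxy : forall u, rR u x -> exists w, rR w y /\ restr_iso u w.
Hypothesis Cyx : forall w, rR w y -> exists u, rR u x /\ restr_iso u w.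

Definition Phi u v := (u = x /\ v = y) \/ exists u1 w1, rR u1 x /\ rR w1 y /\ below u1 u /\
   restr_iso u1 w1 /\ forall H, C H -> iso H u1 w1 -> crel H u v.

Lemma C_Phi : C (mkcls Phi).
Proof.
  apply (C_mk (FOr (FAnd (FEq 1 3) (FEq 0 4)) (FExS (FExS (FAnd (fcrel 0 1 5) (FAnd (fcrel 0 0 6)
    (FAnd (fbelow 0 3 1) (FAnd (frestr 0 1 0) (FAllC (FImp (fiso 1 0 1 0) (fcrel 0 3 2))))))))))
    (scons x (fun _ => y)) (fun _ => R)).
  - intros; apply CR.
  - intros p u v. unfold Phi. satsimp.
    setoid_rewrite sat_fisoR. cbn [scons].
    setoid_rewrite <- below_iff. reflexivity.
Qed.


Lemma K1 u1 w1 : rR u1 x -> rR w1 y -> restr_iso u1 w1 -> forall H, C H -> iso H u1 w1 ->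
  forall u v, crel H u v -> Phi u v.
Proof.
  intros Hu1 Hw1 Ri H CH IH u v Huv. right. exists u1, w1.
  split; [auto|]. split; [auto|]. split; [apply (iso_dom _ _ _ IH _ _ Huv)|].
  split; auto. intros H' CH' IH'. apply (rigid H H' u1 w1); auto.
Qed.

Lemma Kuy u1 w1 w1' : rR w1 y -> rR w1' y -> restr_iso u1 w1 -> restr_iso u1 w1' -> w1 = w1'.
Proof.
  intros H1 H2 R1 R2. destruct (classic (w1 = w1')) as [|Hne]; auto. exfalso.
  apply (b_ax y w1 w1' Hne H1 H2). exact (ri_trans _ _ _ (ri_sym _ _ R1) R2).
Qed.

Lemma Kux u1 u1' w1 : rR u1 x -> rR u1' x -> restr_iso u1 w1 -> restr_iso u1' w1 -> u1 = u1'.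
Proof.
  intros H1 H2 R1 R2. destruct (classic (u1 = u1')) as [|Hne]; auto. exfalso.
  apply (b_ax x u1 u1' Hne H1 H2). exact (ri_trans _ _ _ R1 (ri_sym _ _ R2)).
Qed.

Lemma ext_iso : restr_iso x y.
Proof.
  exists (mkcls Phi). split; [apply C_Phi|]. unfold iso. setoid_rewrite crel_mk.
  split; [|split; [|split]].
  - intros u v [[-> ->]|(u1 & w1 & Hu1 & Hw1 & Bu & Ri & Hall)].
    + split; apply below_refl.
    + destruct Ri as (H0 & CH0 & IH0). destruct (iso_dom _ _ _ IH0 _ _ (Hall H0 CH0 IH0)) as [_ Bv].
      split; [exact (below_trans u u1 x Bu (below_step u1 x Hu1))
             |exact (below_trans v w1 y Bv (below_step w1 y Hw1))].
  - intros u [n Hn]. destruct n as [|m].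
    + simpl in Hn; subst u. exists y. split; [left; auto|].
      intros v' [[_ ->]|(u1&w1&Hu1&_&Bu&_)]; [auto| exfalso; exact (below_cycle _ _ Bu Hu1)].
    + apply chain_last in Hn. destruct Hn as (c & Hn & Hcx).
      destruct (Cxy c Hcx) as (w1 & Hw1 & Ri). assert (Ri0 := Ri). destruct Ri as (H0&CH0&IH0).
      assert (Bu : below c u) by (exists m; auto).
      destruct (iso_tot _ _ _ IH0 u Bu) as [v Hv]. exists v. split.
      { apply (K1 c w1 Hcx Hw1 Ri0 H0 CH0 IH0); auto. }
      intros v' [[-> _]|(u1&w1'&Hu1&Hw1'&Bu1&Ri1&Hall)].
      * exfalso. exact (below_cycle _ _ Bu Hcx).
      * assert (u1 = c) by (apply (disjoint u1 c x u); auto). subst u1.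
        assert (w1' = w1) by (apply (Kuy c w1' w1); auto). subst w1'.
        exact (iso_fun _ _ _ IH0 u v' v (Hall H0 CH0 IH0) Hv).
  - intros v [n Hn]. destruct n as [|m].
    + simpl in Hn; subst v. exists x. split; [left; auto|].
      intros u' [[-> _]|(u1&w1&Hu1&Hw1&Bu&Ri&Hall)]; auto. exfalso.
      destruct Ri as (H0&CH0&IH0). destruct (iso_dom _ _ _ IH0 _ _ (Hall H0 CH0 IH0)) as [_ Bv].
      exact (below_cycle _ _ Bv Hw1).
    + apply chain_last in Hn. destruct Hn as (c & Hn & Hcy).
      destruct (Cyx c Hcy) as (u1 & Hu1 & Ri). assert (Ri0 := Ri). destruct Ri as (H0&CH0&IH0).
      assert (Bv : below c v) by (exists m; auto).
      destruct (iso_sur _ _ _ IH0 v Bv) as [u Hu]. exists u. split.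
      { apply (K1 u1 c Hu1 Hcy Ri0 H0 CH0 IH0); auto. }
      intros u' [[_ ->]|(u1'&w1'&Hu1'&Hw1'&Bu'&Ri'&Hall')].
      * exfalso. exact (below_cycle _ _ Bv Hcy).
      * assert (Ri1 := Ri'). destruct Ri' as (H1&CH1&IH1).
        destruct (iso_dom _ _ _ IH1 _ _ (Hall' H1 CH1 IH1)) as [_ Bv'].
        assert (w1' = c) by (apply (disjoint w1' c y v); auto). subst w1'.
        assert (u1' = u1) by (apply (Kux u1' u1 c); auto). subst u1'.
        exact (iso_inj _ _ _ IH0 u' u v (Hall' H0 CH0 IH0) Hu).
  - intros u u' v v' P1 P2.
    destruct P1 as [[-> ->]|(u1&w1&Hu1&Hw1&Bu&Ri&Hall)];
    destruct P2 as [[-> ->]|(u1'&w1'&Hu1'&Hw1'&Bu'&Ri'&Hall')].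
    + split; intro HH; exfalso;
        [exact (below_cycle x x (below_refl x) HH) | exact (below_cycle y y (below_refl y) HH)].
    + destruct Ri' as (H1&CH1&IH1).
      destruct (iso_dom _ _ _ IH1 _ _ (Hall' H1 CH1 IH1)) as [_ Bv'].
      split; intro HH; exfalso.
      * exact (below_cycle x u' (below_trans u' u1' x Bu' (below_step u1' x Hu1')) HH).
      * exact (below_cycle y v' (below_trans v' w1' y Bv' (below_step w1' y Hw1')) HH).
    + destruct Ri as (H0&CH0&IH0). assert (Huv := Hall H0 CH0 IH0).
      destruct (iso_dom _ _ _ IH0 _ _ Huv) as [_ Bv].
      split; intro HH.
      * assert (u = u1) by (apply (disjoint u u1 x u); auto; apply below_refl). subst u.
        rewrite (iso_fun _ _ _ IH0 _ _ _ Huv (iso_root _ _ _ IH0)). auto.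
      * assert (v = w1) by (apply (disjoint v w1 y v); auto; apply below_refl). subst v.
        rewrite (iso_inj _ _ _ IH0 _ _ _ Huv (iso_root _ _ _ IH0)). auto.
    + destruct (classic (u1 = u1')) as [<-|Hne].
      * assert (w1' = w1) by (apply (Kuy u1 w1' w1); auto). subst w1'.
        destruct Ri as (H0&CH0&IH0).
        exact (iso_pres _ _ _ IH0 _ _ _ _ (Hall H0 CH0 IH0) (Hall' H0 CH0 IH0)).
      * assert (Ri0 := Ri). assert (Ri1 := Ri').
        destruct Ri as (H0&CH0&IH0). destruct Ri' as (H1&CH1&IH1).
        destruct (iso_dom _ _ _ IH0 _ _ (Hall H0 CH0 IH0)) as [_ Bv].
        destruct (iso_dom _ _ _ IH1 _ _ (Hall' H1 CH1 IH1)) as [_ Bv'].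
        split; intro HH; exfalso.
        -- apply Hne. apply (disjoint u1 u1' x u); auto.
           exact (below_trans u u' u1' (below_step u u' HH) Bu').
        -- assert (w1 = w1').
           { apply (disjoint w1 w1' y v); auto. exact (below_trans v v' w1' (below_step v v' HH) Bv'). }
           subst w1'. apply Hne. apply (Kux u1 u1' w1); auto.
Qed.

End ExtIso.


Lemma main_ext : extensional (tM0 mem C M0 R W) (tR mem C M0 R W).
Proof.
  intros x y (bx & Mbx & Hx) (by' & Mby & Hy) H.
  assert (Mx : M0 x) by apply Hx. assert (My : M0 y) by apply Hy.
  assert (Cxy := corr_dir x y bx by' Mbx Hx Mby Hy (fun v Hv => proj1 (H v Hv))).
  assert (Cyx0 := corr_dir y x by' bx Mby Hy Mbx Hx (fun v Hv => proj2 (H v Hv))).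
  assert (Cyx : forall w, rR w y -> exists u, rR u x /\ restr_iso u w).
  { intros w Hw. destruct (Cyx0 w Hw) as (u & Hu & Ri). exists u; split; auto. apply ri_sym; auto. }
  assert (Ixy := ext_iso x y Cxy Cyx).
  destruct Hx as [[_ Rx] Hxmin]. destruct Hy as [[_ Ry] Hymin].
  destruct (Hxmin y) as [->|H1]; [split; auto; exact (ri_trans _ _ _ (ri_sym _ _ Ixy) Rx)| |]; auto.
  destruct (Hymin x) as [->|H2]; [split; auto; exact (ri_trans _ _ _ Ixy Ry)| |]; auto.
  destruct HW as (CW & Hirr & Htr & Htri & Hwf). exfalso. apply (Hirr x). eauto.
Qed.

Lemma main_wf : wf_on (tM0 mem C M0 R W) (tR mem C M0 R W).
Proof.
  intro x. destruct (classic (tM0 mem C M0 R W x)) as [(b & Mb & Hb)|Hn].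
  - exact (wf_main x (proj1 (proj1 Hb)) x b Hb (proj2 (proj1 Hb))).
  - constructor. intros u (_ & Hx & _). contradiction.
Qed.

End S.

Theorem lemma6 (M : Type) (mem : M -> M -> Prop) (C : (M -> Prop) -> Prop)
  (W : M -> Prop) (M0 : M -> Prop) (a : M) (R : M -> Prop) :
  MKstar mem C -> beta_model mem C -> global_wo mem C W ->
  coding_pair mem C M0 a R ->
  extensional (tM0 mem C M0 R W) (tR mem C M0 R W) /\
  wf_on (tM0 mem C M0 R W) (tR mem C M0 R W).
Proof.
  intros HMK Hbeta HW Hcp. split.
  - eapply main_ext; eauto.
  - eapply main_wf; eauto.
Qed.
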